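(* Let $r>0$ and $k\ge1$ be an integer. Let $\mathcal N=(G,\beta,r)$ be a multi-path network of length $k$ with nodes $v_0,\dots,v_k$, where every arc joins two consecutive nodes, and for $i=1,\dots,k$ let $A_i$ be the set of arcs joining $v_{i-1}$ and $v_i$. Let $s=v_0$, $t=v_k$, and let $(\pi,f)$ be a potential-based $(s,t)$-flow of value $d>0$ in $\mathcal N$. If $\pi\in[0,\bar\pi]^V$ for some $\bar\pi>0$, then $$\frac{1}{k\sqrt[r]{k}}\sum_{i=1}^k\sum_{a\in A_i}\mu_a\geq\frac{d}{\sqrt[r]{\bar\pi}},$$ where $\mu_a=\beta_a^{-1/r}$.
   Context: A potential-based flow network $\mathcal N=(G,\beta,r)$ consists of a weakly connected directed multigraph $G=(V,A)$ without loops, resistances $\beta\in\mathbb{R}^A_{>0}$ and a degree $r>0$; the conductance of arc $a$ is $\mu_a=\beta_a^{-1/r}$. A potential-based $(s,t)$-flow of value $d$ is a pair $(\pi,f)\in\mathbb{R}^V\times\mathbb{R}^A$ with $\pi_u-\pi_v=\beta_a\,\mathrm{sign}(f_a)|f_a|^r$ for every arc $a=(u,v)$ and $\sum_{a\in\delta^+(v)}f_a-\sum_{a\in\delta^-(v)}f_a=b_v$ for all $v\in V$, where $b=d(\chi_s-\chi_t)$, $\chi_v$ the unit vector of $v$, and $\delta^+(v)$, $\delta^-(v)$ are the arcs leaving, resp. entering, $v$. *)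

(* Defs.v *)
From HB Require Import structures.
From mathcomp Require Import all_boot all_order all_algebra.
From mathcomp Require Import reals exp.
Set Implicit Arguments. Unset Strict Implicit. Unset Printing Implicit Defensive.
Import Order.TTheory GRing.Theory Num.Theory.
Local Open Scope ring_scope.

Definition conductance (R : realType) (r : R) (A : finType) (beta : A -> R)
  (a : A) : R := powR (beta a) (- r^-1).

Definition supply (R : realType) (V : finType) (s t : V) (d : R) (v : V) : R :=
  d * ((v == s)%:R - (v == t)%:R).

Definition potential_flow (R : realType) (V A : finType)
  (tail head : A -> V) (beta : A -> R) (r : R) (s t : V) (d : R)
  (pi : V -> R) (f : A -> R) : Prop :=
  (forall a : A, pi (tail a) - pi (head a) = beta a * (Num.sg (f a) * powR `|f a| r))
  /\ (forall v : V,
        \sum_(a | tail a == v) f a - \sum_(a | head a == v) f a = supply s t d v).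

Definition joins (k : nat) (A : finType) (tail head : A -> 'I_k.+1)
  (i : nat) (a : A) : bool :=
  ((tail a == i.-1 :> nat) && (head a == i :> nat)) ||
  ((tail a == i :> nat) && (head a == i.-1 :> nat)).

Definition multi_path_network (k : nat) (A : finType) (tail head : A -> 'I_k.+1)
  : Prop :=
  (forall a : A, exists i : nat, (1 <= i <= k)%N /\ joins tail head i a)
  (* weak connectivity: each consecutive pair is joined by some arc *)
  /\ (forall i : nat, (1 <= i <= k)%N -> exists a : A, joins tail head i a).

(* Main.v *)
Require Import Defs.
From HB Require Import structures.
From mathcomp Require Import all_boot all_order all_algebra.
From mathcomp Require Import reals sequences exp lra ring zify.
Import Order.TTheory GRing.Theory Num.Theory.
Local Open Scope ring_scope.

Lemma part (R : realType) (A V : finType) (p : A -> V) (Q : pred V) (F : A -> R) :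
  \sum_(v | Q v) \sum_(a | p a == v) F a = \sum_(a | Q (p a)) F a.
Proof.
rewrite (partition_big p Q) //; apply: eq_bigr => v Qv.
by apply: eq_bigl => a; case: eqP => [->|]; rewrite ?Qv ?andbF.
Qed.

Lemma joins_cases (k : nat) (A : finType) (tail head : A -> 'I_k.+1) (a : A) (j i : nat) :
  (1 <= i)%N -> joins tail head i a ->
  (joins tail head j.+1 a ->
     ((tail a = j :> nat) /\ (head a = j.+1 :> nat)) \/
     ((tail a = j.+1 :> nat) /\ (head a = j :> nat)))
  /\ (~~ joins tail head j.+1 a -> (tail a <= j)%N = (head a <= j)%N).
Proof.
rewrite /joins => i1 Hi; split.
  by case/orP => /andP[/eqP -> /eqP ->]; [left|right].
have [E|ne] := eqVneq i j.+1.
  by rewrite E in Hi; rewrite Hi.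
move: Hi => /orP[/andP[/eqP -> /eqP ->] | /andP[/eqP -> /eqP ->]] _.
  by case: (leqP i.-1 j); case: (leqP i j) => //; move: ne => /eqP; lia.
by case: (leqP i.-1 j); case: (leqP i j) => //; move: ne => /eqP; lia.
Qed.


Lemma bern (R : realType) (r t : R) : 0 < r -> 0 < t ->
  1 + r - r * t <= powR t^-1 r.
Proof.
move=> r0 t0.
rewrite /powR invr_eq0 gt_eqF // lnV ?posrE //.
apply: le_trans (expR_ge1Dx _).
have h : -1 < t - 1 by lra.
have hl : ln t <= t - 1 by have := le_ln1Dx h; rewrite (addrC 1) subrK.
have : r * ln t <= r * (t - 1) by rewrite ler_pM2l.
nra.
Qed.

Lemma powK (R : realType) (r x : R) : 0 < r -> 0 <= x -> powR (powR x r) r^-1 = x.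
Proof. by move=> r0 x0; rewrite -powRrM divff ?gt_eqF // powRr1. Qed.
Lemma powK' (R : realType) (r x : R) : 0 < r -> 0 <= x -> powR (powR x r^-1) r = x.
Proof. by move=> r0 x0; rewrite -powRrM mulVf ?gt_eqF // powRr1. Qed.

Lemma analytic (R : realType) (r d pibar : R) (k : nat) (x : nat -> R) :
  0 < r -> (1 <= k)%N -> 0 < d -> 0 < pibar ->
  (forall j, (j < k)%N -> 0 < x j) ->
  \sum_(j < k) powR (d / x j) r <= pibar ->
  d / powR pibar r^-1 <= (k%:R * powR k%:R r^-1)^-1 * \sum_(j < k) x j.
Proof.
move=> r0 k1 d0 p0 xp hs.
set S := \sum_(j < k) x j.
have k0 : 0 < k%:R :> R by rewrite ltr0n.
have S0 : 0 < S.
  rewrite /S (bigD1 (Ordinal k1)) //=; apply: ltr_wpDr; last exact: xp.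
  by apply: sumr_ge0 => i _; apply/ltW/xp.
set m := S / k%:R.
have m0 : 0 < m by rewrite divr_gt0.
set Q := powR (d / m) r.
have Q0 : 0 < Q by rewrite powR_gt0 // divr_gt0.
have key : Q * k%:R <= pibar.
  apply: le_trans hs.
  have -> : Q * k%:R = \sum_(j < k) Q * (1 + r - r * (x j / m)).
    rewrite -mulr_sumr sumrB sumr_const card_ord -mulr_sumr -mulr_suml -/S /m.
    congr (_ * _); rewrite -[(1+r) *+ k]mulr_natr; field; by rewrite !gt_eqF.
  apply: ler_sum => j _.
  have xj := xp j (ltn_ord j).
  have -> : d / x j = d / m * (x j / m)^-1.
    by rewrite invf_div; field; rewrite !gt_eqF.
  rewrite powRM ?ler_pM2l //; last 2 first.
  - by rewrite ltW // divr_gt0.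
  - by rewrite invr_ge0 ltW // divr_gt0.
  by apply: bern => //; rewrite divr_gt0.
have pr : 0 < powR pibar r^-1 by rewrite powR_gt0.
have kr : 0 < powR k%:R r^-1 by rewrite powR_gt0.
have h1 : powR (Q * k%:R) r^-1 <= powR pibar r^-1.
  by apply: ge0_ler_powR => //; rewrite ?invr_ge0 ?ltW // nnegrE ltW // mulr_gt0.
rewrite (powRM _ (ltW Q0) (ltW k0)) /Q (@powK R r (d/m) r0 (ltW (divr_gt0 d0 m0))) in h1.
have e : (k%:R * powR k%:R r^-1)^-1 * S = m / powR k%:R r^-1.
  by rewrite /m; field; rewrite !gt_eqF.
rewrite e ler_pdivrMr // mulrAC ler_pdivlMr //.
by move: h1; rewrite mulrAC ler_pdivrMr // (mulrC (pibar `^ r^-1)).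
Qed.

Lemma flow_arc (R : realType) (r beta D g : R) : 0 < r -> 0 < beta ->
  D = beta * (Num.sg g * powR `|g| r) ->
  (D <= 0 -> g <= 0) /\ (0 < D -> g = powR D r^-1 * powR beta (- r^-1)).
Proof.
move=> r0 b0 ->.
have [g0|g0|->] := ltrgtP g 0.
- rewrite ltr0_sg // mulN1r mulrN oppr_gt0 pmulr_rlt0 // ltNge powR_ge0.
  by split=> // _; apply: ltW.
- rewrite gtr0_sg // mul1r gtr0_norm //.
  have gp : 0 < powR g r by rewrite powR_gt0.
  split; first by rewrite leNgt mulr_gt0.
  move=> _; rewrite powRN powRM ?ltW // powK ?ltW //.
  by rewrite mulrAC divff ?mul1r // gt_eqF // powR_gt0.
- by rewrite sgr0 mul0r mulr0 ltxx.
Qed.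

Theorem theorem2 (R : realType) (r : R) (k : nat) (A : finType)
  (tail head : A -> 'I_k.+1) (beta : A -> R) (d pibar : R)
  (pi : 'I_k.+1 -> R) (f : A -> R) :
  0 < r -> (1 <= k)%N ->
  multi_path_network tail head ->
  (forall a, 0 < beta a) ->
  0 < d ->
  potential_flow tail head beta r ord0 ord_max d pi f ->
  0 < pibar ->
  (forall v, 0 <= pi v <= pibar) ->
  (k%:R * powR k%:R r^-1)^-1 *
    \sum_(i < k) \sum_(a | joins tail head i.+1 a) conductance r beta a
  >= d / powR pibar r^-1.
Proof.
move=> r0 k1 [Hall _] bp d0 [Hpot Hcons] p0 pib.
pose C := fun j : nat => \sum_(a | joins tail head j.+1 a) conductance r beta a.
pose D := fun j : nat => pi (inord j) - pi (inord j.+1).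
have step : forall j, (j < k)%N -> 0 < D j /\ d = powR (D j) r^-1 * C j.
  move=> j jk.
  pose c := fun a => ((tail a <= j)%N%:R - (head a <= j)%N%:R : R).
  have cut : \sum_a f a * c a = d.
    have e : \sum_(v : 'I_k.+1 | (v <= j)%N) (\sum_(a | tail a == v) f a - \sum_(a | head a == v) f a)
        = \sum_(v : 'I_k.+1 | (v <= j)%N) supply ord0 ord_max d v.
      by apply: eq_bigr => v _; exact: Hcons.
    rewrite sumrB !part in e.
    have ind : forall P : pred A, \sum_(a | P a) f a = \sum_a f a * (P a)%:R.
      by move=> P; rewrite big_mkcond; apply: eq_bigr => a _; case: (P a); rewrite ?mulr1 ?mulr0.
    rewrite !ind -sumrB in e.
    have -> : \sum_a f a * c a = \sum_a (f a * (tail a <= j)%N%:R - f a * (head a <= j)%N%:R).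
      by apply: eq_bigr => a _; rewrite /c mulrBr.
    rewrite e (bigD1 ord0) //= big1 ?addr0.
      rewrite /supply eqxx.
      have -> : (ord0 == ord_max :> 'I_k.+1) = false.
        by apply/negbTE; apply/eqP => /(congr1 val) /=; lia.
      by rewrite subr0 mulr1.
    move=> v /andP[vj vn]; rewrite /supply (negbTE vn).
    have -> : (v == ord_max) = false.
      by apply/negbTE; apply/eqP => E; move: vj; rewrite E /=; lia.
    by rewrite subrr mulr0.
  have layer : \sum_(a | joins tail head j.+1 a) c a * f a = d.
    rewrite -cut [RHS](bigID (joins tail head j.+1)) /= [X in _ = _ + X]big1 ?addr0.
      by apply: eq_bigr => a _; rewrite mulrC.
    move=> a Hn; have [i [/andP[i1 ik] Hi]] := Hall a.
    have [_ H2] := @joins_cases _ _ tail head a j i i1 Hi.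
    by rewrite /c (H2 Hn) subrr mulr0.
  have arc : forall a, joins tail head j.+1 a ->
      D j = beta a * (Num.sg (c a * f a) * powR `|c a * f a| r).
    move=> a la; have [i [/andP[i1 ik] Hi]] := Hall a.
    have [H1 _] := @joins_cases _ _ tail head a j i i1 Hi.
    have jk1 : (j < k.+1)%N by lia.
    have jk2 : (j.+1 < k.+1)%N by lia.
    have hp := Hpot a; rewrite /c /D.
    case: (H1 la) => [[Ht Hh]|[Ht Hh]].
      have Et : tail a = inord j by apply: val_inj; rewrite /= inordK.
      have Eh : head a = inord j.+1 by apply: val_inj; rewrite /= inordK.
      rewrite Et Eh in hp *; rewrite inordK // inordK // leqnn ltnn /= mulr1n mulr0n subr0 mul1r.
      exact: hp.
    have Et : tail a = inord j.+1 by apply: val_inj; rewrite /= inordK.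
    have Eh : head a = inord j by apply: val_inj; rewrite /= inordK.
    rewrite Et Eh in hp *; rewrite inordK // inordK // leqnn ltnn /= mulr1n mulr0n sub0r mulN1r sgrN normrN.
    by rewrite mulNr mulrN -hp opprB.
  have Dp : 0 < D j.
    rewrite ltNge; apply/negP => Dle.
    have : \sum_(a | joins tail head j.+1 a) c a * f a <= 0.
      by apply: sumr_le0 => a la; exact: (@flow_arc _ _ _ _ _ r0 (bp a) (arc a la)).1 Dle.
    by rewrite layer leNgt d0.
  split=> //.
  rewrite -layer /C mulr_sumr; apply: eq_bigr => a la.
  exact: (@flow_arc _ _ _ _ _ r0 (bp a) (arc a la)).2 Dp.
have Cp : forall j, (j < k)%N -> 0 < C j.
  move=> j jk; have [Dp e] := step j jk.
  by move: d0; rewrite e pmulr_rgt0 // powR_gt0.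
have hs : \sum_(j < k) powR (d / C j) r <= pibar.
  have -> : \sum_(j < k) powR (d / C j) r = \sum_(j < k) D j.
    apply: eq_bigr => j _; have [Dp e] := step j (ltn_ord j).
    rewrite e mulrK ?powK' ?ltW //; exact: unitf_gt0 (Cp j (ltn_ord j)).
  rewrite -(big_mkord (fun _ => true) D) -[X in X <= _]opprK -sumrN.
  have -> : \sum_(0 <= i < k) - D i = \sum_(0 <= i < k) (pi (inord i.+1) - pi (inord i)).
    by apply: eq_bigr => i _; rewrite /D opprB.
  rewrite telescope_sumr // opprB.
  have := pib (inord 0); have := pib (inord k).
  move=> /andP[h1 h2] /andP[h3 h4]; lra.
exact: (@analytic _ _ _ _ _ _ r0 k1 d0 p0 Cp hs).
Qed.
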